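(* Let $T\in RB(n)$ with $n\ge 2$. Then $ES_T(i)=FP_T(i)$ holds for all $i\in[n]$ and for all assignments of strictly positive edge lengths to $T$ if and only if $T$ is a semi-balanced tree.
   Context: $RB(n)$ is the set of rooted binary phylogenetic trees with leaf set $[n]$ (every non-leaf vertex has out-degree 2). Each edge has length $l(e)>0$, and $n(e)$ is the number of leaves below $e$. $FP_T(i)=\sum_{e\in P(T;\rho,i)} l(e)/n(e)$ and $ES_T(i)=\sum_{e\in P(T;\rho,i)} l(e)/2^{k(e,i)}$, where $P(T;\rho,i)$ is the path from the root $\rho$ to leaf $i$ and $k(e,i)$ is the number of edges strictly between $e$ and $i$ on it. The fully balanced tree of height $h\ge 0$ is the rooted binary tree with $2^h$ leaves in which every leaf is separated from the root by exactly $h$ edges (for $h=0$ it is a single leaf). A rooted binary tree $T$ is semi-balanced if the two maximal pending subtrees rooted at the two children of the root are fully balanced trees of heights $h'$ and $h''$, not necessarily equal. *)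

(* Defs.v *)
From Stdlib Require Import Reals List Permutation.
Import ListNotations.
Open Scope R_scope.

Inductive tree : Type :=
| Leaf : nat -> tree
| Node : tree -> tree -> tree.

Fixpoint leaves (t : tree) : list nat :=
  match t with
  | Leaf i => [i]
  | Node a b => leaves a ++ leaves b
  end.

Definition is_RB (n : nat) (t : tree) : Prop :=
  Permutation (leaves t) (seq 1 n).

(* A vertex is addressed by the sequence of left/right choices from the
   root (stored most-recent-first: the child address is  b :: addr ).
   Every non-root vertex v is the lower endpoint of a unique edge, so an
   edge-length assignment is a function  len : list bool -> R  (its
   values on addresses not in the tree are irrelevant). *)
Definition lengths := list bool -> R.

Fixpoint depth_in (t : tree) (i : nat) : nat :=
  match t with
  | Leaf _ => 0
  | Node a b =>
      if in_dec Nat.eq_dec i (leaves a) then S (depth_in a i)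
      else S (depth_in b i)
  end.

Fixpoint FP_aux (t : tree) (addr : list bool) (len : lengths) (i : nat) : R :=
  match t with
  | Leaf _ => 0
  | Node a b =>
      if in_dec Nat.eq_dec i (leaves a) then
        len (false :: addr) / INR (length (leaves a)) + FP_aux a (false :: addr) len i
      else if in_dec Nat.eq_dec i (leaves b) then
        len (true :: addr) / INR (length (leaves b)) + FP_aux b (true :: addr) len i
      else 0
  end.

Definition FP (t : tree) (len : lengths) (i : nat) : R := FP_aux t [] len i.

(* ES_T(i) = sum over edges e on the root-to-i path of l(e)/2^{k(e,i)},
   where k(e,i) = number of edges strictly between e and i, i.e. the depth
   of i in the subtree hanging below e. *)
Fixpoint ES_aux (t : tree) (addr : list bool) (len : lengths) (i : nat) : R :=
  match t with
  | Leaf _ => 0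
  | Node a b =>
      if in_dec Nat.eq_dec i (leaves a) then
        len (false :: addr) / 2 ^ (depth_in a i) + ES_aux a (false :: addr) len i
      else if in_dec Nat.eq_dec i (leaves b) then
        len (true :: addr) / 2 ^ (depth_in b i) + ES_aux b (true :: addr) len i
      else 0
  end.

Definition ES (t : tree) (len : lengths) (i : nat) : R := ES_aux t [] len i.

Fixpoint fully_balanced (t : tree) (h : nat) : Prop :=
  match t, h with
  | Leaf _, O => True
  | Node a b, S h' => fully_balanced a h' /\ fully_balanced b h'
  | _, _ => False
  end.

Definition semi_balanced (t : tree) : Prop :=
  match t with
  | Leaf _ => False
  | Node a b => exists h1 h2, fully_balanced a h1 /\ fully_balanced b h2
  end.

(* Main.v *)
Require Import Defs.
From Stdlib Require Import Reals List Permutation Lra Lia Arith.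
Import ListNotations.
Open Scope R_scope.

Lemma leaves_ne (t : tree) : exists i, In i (leaves t).
Proof.
  induction t as [k|a [x Hx] b _]; simpl.
  - exists k; auto.
  - exists x; apply in_or_app; auto.
Qed.

Lemma nodup_disj (l1 l2 : list nat) x : NoDup (l1 ++ l2) -> In x l1 -> ~ In x l2.
Proof.
  induction l1 as [|y l IH]; simpl; intros Hn Hi; [contradiction|].
  inversion Hn; subst. destruct Hi as [<-|Hi].
  - intro H; apply H1; apply in_or_app; auto.
  - auto.
Qed.

Lemma agree (t : tree) : forall addr len len' i,
  (forall e, (length addr < length e)%nat -> len e = len' e) ->
  ES_aux t addr len i = ES_aux t addr len' i /\ FP_aux t addr len i = FP_aux t addr len' i.
Proof.
  induction t as [k|a IHa b IHb]; intros addr len len' i H; simpl; [split; reflexivity|].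
  assert (Hf : forall e, (length (false :: addr) < length e)%nat -> len e = len' e)
    by (intros e He; apply H; simpl in He; lia).
  assert (Ht : forall e, (length (true :: addr) < length e)%nat -> len e = len' e)
    by (intros e He; apply H; simpl in He; lia).
  destruct (IHa _ _ _ i Hf) as [A1 A2]. destruct (IHb _ _ _ i Ht) as [B1 B2].
  rewrite (H (false :: addr)) by (simpl; lia).
  rewrite (H (true :: addr)) by (simpl; lia).
  rewrite A1, A2, B1, B2. split; reflexivity.
Qed.

Lemma fb_len t : forall h, fully_balanced t h -> length (leaves t) = (2 ^ h)%nat.
Proof.
  induction t as [k|a IHa b IHb]; intros [|h] H; simpl in *; try contradiction; auto.
  destruct H as [Ha Hb]. rewrite length_app, (IHa _ Ha), (IHb _ Hb). lia.
Qed.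

Lemma fb_depth t : forall h i, fully_balanced t h -> In i (leaves t) -> depth_in t i = h.
Proof.
  induction t as [k|a IHa b IHb]; intros [|h] i H Hi; simpl in *; try contradiction; auto.
  destruct H as [Ha Hb]. destruct (in_dec Nat.eq_dec i (leaves a)).
  - rewrite (IHa h); auto.
  - rewrite (IHb h); auto. apply in_app_or in Hi; tauto.
Qed.

Lemma node_eq a b h1 h2 addr len i :
  fully_balanced a h1 -> fully_balanced b h2 ->
  (forall ad, ES_aux a ad len i = FP_aux a ad len i) ->
  (forall ad, ES_aux b ad len i = FP_aux b ad len i) ->
  ES_aux (Node a b) addr len i = FP_aux (Node a b) addr len i.
Proof.
  intros Ha Hb Ea Eb. simpl.
  destruct (in_dec Nat.eq_dec i (leaves a)) as [Hi|Hi].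
  - rewrite (fb_depth _ _ _ Ha Hi), (fb_len _ _ Ha), pow_INR, Ea.
    replace (INR 2) with 2 by (simpl; lra). reflexivity.
  - destruct (in_dec Nat.eq_dec i (leaves b)) as [Hj|Hj]; [|reflexivity].
    rewrite (fb_depth _ _ _ Hb Hj), (fb_len _ _ Hb), pow_INR, Eb.
    replace (INR 2) with 2 by (simpl; lra). reflexivity.
Qed.

Lemma fb_eq t : forall h, fully_balanced t h -> forall addr len i,
  ES_aux t addr len i = FP_aux t addr len i.
Proof.
  induction t as [k|a IHa b IHb]; intros [|h] H addr len i; simpl in H; try contradiction.
  - reflexivity.
  - destruct H as [Ha Hb]. apply (node_eq a b h h); auto; intros; [apply (IHa h Ha) | apply (IHb h Hb)].
Qed.

Definition Good t addr := forall len : lengths, (forall e, 0 < len e) ->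
  forall i, In i (leaves t) -> ES_aux t addr len i = FP_aux t addr len i.

Lemma coef_extract (t : tree) addr (ES1 FP1 : lengths -> R) d m :
  (forall len : lengths, (forall e, 0 < len e) ->
     len (addr) / 2 ^ d + ES1 len = len addr / INR m + FP1 len) ->
  (forall len len' : lengths, (forall e, e <> addr -> len e = len' e) ->
     ES1 len = ES1 len' /\ FP1 len = FP1 len') ->
  (2 ^ d = m)%nat /\ (forall len : lengths, (forall e, 0 < len e) -> ES1 len = FP1 len).
Proof.
  intros H Hag.
  set (L := fun _ : list bool => 1).
  set (L' := fun e : list bool => if list_eq_dec Bool.bool_dec e addr then 2 else 1).
  assert (HL : L addr = 1) by reflexivity.
  assert (HL' : L' addr = 2) by (unfold L'; destruct list_eq_dec; congruence).
  assert (P1 : forall e, 0 < L e) by (intros; unfold L; lra).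
  assert (P2 : forall e, 0 < L' e) by (intros; unfold L'; destruct list_eq_dec; lra).
  destruct (Hag L L') as [A1 A2].
  { intros e He. unfold L, L'. destruct list_eq_dec; congruence. }
  pose proof (H L P1) as E1. pose proof (H L' P2) as E2.
  rewrite HL in E1. rewrite HL', <- A1, <- A2 in E2.
  assert (C : / 2 ^ d = / INR m) by (unfold Rdiv in *; lra).
  split.
  - apply Rinv_eq_reg in C. apply INR_eq. rewrite pow_INR, <- C.
    replace (INR 2) with 2 by (simpl; lra). reflexivity.
  - intros len Hp. specialize (H len Hp). unfold Rdiv in H. rewrite C in H. lra.
Qed.

Lemma split_good a b addr : NoDup (leaves (Node a b)) -> Good (Node a b) addr ->
  (forall i, In i (leaves a) -> (2 ^ depth_in a i)%nat = length (leaves a)) /\ Good a (false :: addr) /\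
  (forall i, In i (leaves b) -> (2 ^ depth_in b i)%nat = length (leaves b)) /\ Good b (true :: addr).
Proof.
  intros Hn HG. simpl in Hn.
  assert (Ra : forall i, In i (leaves a) ->
    (2 ^ depth_in a i)%nat = length (leaves a) /\
    (forall len : lengths, (forall e, 0 < len e) -> ES_aux a (false :: addr) len i = FP_aux a (false :: addr) len i)).
  { intros i Hi. apply (coef_extract a (false :: addr)).
    - intros len Hp. pose proof (HG len Hp i) as E. simpl in E.
      destruct (in_dec Nat.eq_dec i (leaves a)); [|contradiction].
      apply E. apply in_or_app; auto.
    - intros len len' Hag. apply agree. intros e He. apply Hag. intro; subst. simpl in He; lia. }
  assert (Rb : forall i, In i (leaves b) ->
    (2 ^ depth_in b i)%nat = length (leaves b) /\
    (forall len : lengths, (forall e, 0 < len e) -> ES_aux b (true :: addr) len i = FP_aux b (true :: addr) len i)).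
  { intros i Hi. apply (coef_extract b (true :: addr)).
    - intros len Hp. pose proof (HG len Hp i) as E. simpl in E.
      destruct (in_dec Nat.eq_dec i (leaves a)) as [Ha|_].
      { exfalso. exact (nodup_disj _ _ _ Hn Ha Hi). }
      destruct (in_dec Nat.eq_dec i (leaves b)); [|contradiction].
      apply E. apply in_or_app; auto.
    - intros len len' Hag. apply agree. intros e He. apply Hag. intro; subst. simpl in He; lia. }
  repeat split.
  - intros i Hi; apply (Ra i Hi).
  - intros len Hp i Hi; apply (Ra i Hi); auto.
  - intros i Hi; apply (Rb i Hi).
  - intros len Hp i Hi; apply (Rb i Hi); auto.
Qed.

Lemma good_fb t : forall addr, NoDup (leaves t) -> Good t addr ->
  (forall i, In i (leaves t) -> (2 ^ depth_in t i)%nat = length (leaves t)) ->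
  exists h, fully_balanced t h.
Proof.
  induction t as [k|a IHa b IHb]; intros addr Hn HG Hc.
  - exists 0%nat; simpl; auto.
  - destruct (split_good a b addr Hn HG) as (Ca & Ga & Cb & Gb).
    simpl in Hn.
    destruct (IHa _ (NoDup_app_remove_r _ _ Hn) Ga Ca) as [h1 H1].
    destruct (IHb _ (NoDup_app_remove_l _ _ Hn) Gb Cb) as [h2 H2].
    destruct (leaves_ne a) as [x Hx].
    pose proof (Hc x) as E. simpl in E.
    destruct (in_dec Nat.eq_dec x (leaves a)); [|contradiction].
    specialize (E (in_or_app _ _ _ (or_introl Hx))).
    rewrite (fb_depth _ _ _ H1 Hx), length_app, (fb_len _ _ H1), (fb_len _ _ H2) in E.
    simpl in E. assert (Heq : h1 = h2) by (apply (Nat.pow_inj_r 2); lia).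
    subst. exists (S h2). simpl; auto.
Qed.

Theorem theorem4 (n : nat) (T : tree) :
  (2 <= n)%nat -> is_RB n T ->
  ((forall len : lengths, (forall e, 0 < len e) ->
      forall i : nat, (1 <= i <= n)%nat -> ES T len i = FP T len i)
   <-> semi_balanced T).
Proof.
  intros Hn HRB. unfold is_RB in HRB.
  assert (ND : NoDup (leaves T)).
  { apply (Permutation_NoDup (Permutation_sym HRB)). apply seq_NoDup. }
  split.
  - intros H. destruct T as [k|a b].
    + apply Permutation_length in HRB. rewrite length_seq in HRB. simpl in HRB. lia.
    + assert (G : Good (Node a b) []).
      { intros len Hp i Hi. apply (H len Hp).
        apply (Permutation_in _ HRB), in_seq in Hi. lia. }
      destruct (split_good a b [] ND G) as (Ca & Ga & Cb & Gb).
      simpl in ND.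
      destruct (good_fb a _ (NoDup_app_remove_r _ _ ND) Ga Ca) as [h1 H1].
      destruct (good_fb b _ (NoDup_app_remove_l _ _ ND) Gb Cb) as [h2 H2].
      exists h1, h2; auto.
  - destruct T as [k|a b]; simpl; [contradiction|].
    intros (h1 & h2 & H1 & H2) len Hp i Hi. unfold ES, FP.
    apply (node_eq a b h1 h2); auto; intros; eapply fb_eq; eauto.
Qed.
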